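(* For any $\beta\in Q^\vee$ and $i,j\in I$, the element $f_i^\beta f_jf_i^{-\beta}$ of $\tilde A^P$ belongs to $\tilde A^{\mathrm{pa}}$. More precisely, $f_i^\beta f_jf_i^{-\beta}$ belongs to the subalgebra of $\tilde A^{\mathrm{pa}}$ generated by $\{f_i^{\pm1},f_j,\beta\}$ in the Kac–Moody case and by $\{f_i^{\pm1},f_j,q_i^{\pm\beta}\}$ (where $q_i^{\beta}=q^{d_i\beta}$) in the $q$-difference case. In particular $s_i(f_j)=f_i^{\alpha_i^\vee}f_jf_i^{-\alpha_i^\vee}\in\tilde A^{\mathrm{pa}}$.
   Context: Let $[a_{ij}]_{i,j\in I}$ be a symmetrizable generalized Cartan matrix ($a_{ii}=2$, $a_{ij}\le0$ for $i\ne j$, $a_{ij}=0\iff a_{ji}=0$, $d_ia_{ij}=d_ja_{ji}$, $d_i\in\mathbb{Z}_{>0}$). $Q^\vee$ is a free $\mathbb{Z}$-module, $P=\mathrm{Hom}(Q^\vee,\mathbb{Z})$, $\alpha_i^\vee\in Q^\vee$ linearly independent, $\alpha_i\in P$ with $\langle\alpha_i^\vee,\alpha_j\rangle=a_{ij}$. Kac–Moody case: $U_-$ is the $\mathbb{C}$-algebra generated by $f_i$ with Serre relations $\sum_{k=0}^{1-a_{ij}}(-1)^kf_i^{(1-a_{ij}-k)}f_jf_i^{(k)}=0$ ($i\ne j$), $f_i^{(k)}=f_i^k/k!$. $q$-difference case: the $\mathbb{C}(q)$-algebra with the same relations, $f_i^{(k)}=f_i^k/[k]_{q_i}!$, $q_i=q^{d_i}$,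 $[a]_q=(q^a-q^{-a})/(q-q^{-1})$. $A$ is a quotient of $U_-$ that is an integral domain with images $f_i\ne0$; $\tilde A=A[f_i^{-1}\mid i\in I]$ the Ore localization at the multiplicative set generated by the $f_i$. $\tilde A^{\mathrm{pa}}$ is $\tilde A[\beta\mid\beta\in Q^\vee]$ (polynomial ring in a $\mathbb{Z}$-basis of $Q^\vee$, variables central, so $Q^\vee\subset\tilde A^{\mathrm{pa}}$) in the Kac–Moody case, and the central Laurent extension $\tilde A[q^\beta\mid\beta\in Q^\vee]$, $q^\beta q^\gamma=q^{\beta+\gamma}$, in the $q$-case. For $\lambda\in P$, $\phi_\lambda:\tilde A^{\mathrm{pa}}\to\tilde A$ fixes $\tilde A$ and substitutes $\beta\mapsto\langle\beta,\lambda\rangle$ (resp. $q^\beta\mapsto q^{\langle\beta,\lambda\rangle}$); via the injective map $(\phi_\lambda)_{\lambda\in P}$ we identify $\tilde A^{\mathrm{pa}}$ with a subalgebra of the product algebra $\tilde A^P$. The fractional power is $f_i^\beta=(f_i^{\langle\beta,\lambda\rangle})_{\lambda\in P}\in\tilde A^P$, and $f_j$ denotes the constant family. *)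

(* Defs.v *)
From HB Require Import structures.
From mathcomp Require Import all_boot all_order all_algebra.
From mathcomp Require Import Rstruct complex.
Set Implicit Arguments.
Unset Strict Implicit.
Unset Printing Implicit Defensive.
Import Order.TTheory GRing.Theory Num.Theory.
Local Open Scope ring_scope.

Definition CC : numClosedFieldType := (Rdefinitions.R)[i].
Definition QF : fieldType := {fraction {poly CC}}.
Definition qv : QF := tofrac ('X : {poly CC}).

Definition sym_gcm (I : finType) (a : I -> I -> int) (d : I -> nat) : Prop :=
  [/\ forall i, a i i = 2,
      forall i j, i != j -> a i j <= 0,
      forall i j, (a i j == 0) = (a j i == 0),
      forall i, (0 < d i)%N
    & forall i j, (d i)%:Z * a i j = (d j)%:Z * a j i].

(* Q^vee is the free Z-module Z^m (row vectors); P = Hom(Q^vee, Z) is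
   identified with Z^m through the dual basis, with pairing <beta, lambda>. *)
Definition pairing (m : nat) (beta lam : 'rV[int]_m) : int :=
  \sum_(r < m) beta 0 r * lam 0 r.

Definition realization (I : finType) (a : I -> I -> int) (m : nat)
    (coroot root : I -> 'rV[int]_m) : Prop :=
  (forall c : I -> int, \sum_(i : I) c i *: coroot i = 0 -> forall i, c i = 0)
  /\ (forall i j, pairing (coroot i) (root j) = a i j).

(* fct i n is the factorial used in the divided power f_i^(n):
   n! (Kac-Moody case) or [n]_{q_i}! (q-difference case). *)
Definition dpow (k : fieldType) (A : lalgType k) (c : k) (x : A) (n : nat) : A :=
  c^-1 *: x ^+ n.

Definition serre_rel (k : fieldType) (A : lalgType k) (fct : nat -> k)
    (x y : A) (aij : int) : Prop :=
  let N := `|1 - aij|%N in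
  \sum_(r < N.+1) (-1) ^+ r *: (dpow (fct (N - r)%N) x (N - r) * y * dpow (fct r) x r) = 0.

Definition km_fact (I : finType) (i : I) (n : nat) : CC := (n`!)%:R.

Definition qint (x : QF) (n : nat) : QF := (x ^+ n - x ^- n) / (x - x^-1).
Definition qfact (x : QF) (n : nat) : QF := \prod_(1 <= r < n.+1) qint x r.
Definition q_fact (I : finType) (d : I -> nat) (i : I) (n : nat) : QF :=
  qfact (qv ^+ d i) n.

Inductive alg_gen (k : fieldType) (A : lalgType k) (S : A -> Prop) : A -> Prop :=
| ag_gen x : S x -> alg_gen S x
| ag_scal c : alg_gen S (c%:A)
| ag_add x y : alg_gen S x -> alg_gen S y -> alg_gen S (x + y)
| ag_mul x y : alg_gen S x -> alg_gen S y -> alg_gen S (x * y).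

Definition quotient_of_Uminus (k : fieldType) (I : finType) (fct : I -> nat -> k)
    (a : I -> I -> int) (A : lalgType k) (f : I -> A) : Prop :=
  (forall x, alg_gen (fun y => exists i, y = f i) x)
  /\ (forall i j, i != j -> serre_rel (fct i) (f i) (f j) (a i j)).

Definition is_domain (R : pzRingType) : Prop :=
  (1 : R) != 0 /\ forall x y : R, x * y = 0 -> x = 0 \/ y = 0.

(* B together with iota : A -> B is the Ore localization A[f_i^-1] of A at the
   multiplicative set generated by the f_i: iota is an injective k-algebra
   morphism (A is a domain, so the kernel is trivial), the iota (f_i) are units,
   and every element of B is a fraction iota(a) iota(s)^-1, s a product of f_i's. *)
Definition ore_localization (k : fieldType) (I : finType) (A : lalgType k)
    (B : unitAlgType k) (f : I -> A) (iota : A -> B) : Prop :=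
  [/\ (forall x y, iota (x + y) = iota x + iota y),
      (forall x y, iota (x * y) = iota x * iota y),
      iota 1 = 1,
      (forall (c : k) x, iota (c *: x) = c *: iota x)
    & injective iota] /\
  (forall i, iota (f i) \is a GRing.unit) /\
  (forall b, exists (w : seq I) (x : A), b = iota x * (iota (\prod_(i <- w) f i))^-1).

Inductive fam_gen (k : fieldType) (B : lalgType k) (m : nat)
    (S : ('rV[int]_m -> B) -> Prop) : ('rV[int]_m -> B) -> Prop :=
| fg_gen F : S F -> fam_gen S F
| fg_scal (c : k) : fam_gen S (fun _ => c%:A)
| fg_add F G : fam_gen S F -> fam_gen S G -> fam_gen S (fun l => F l + G l)
| fg_mul F G : fam_gen S F -> fam_gen S G -> fam_gen S (fun l => F l * G l)
| fg_ext F G : (forall l, F l = G l) -> fam_gen S F -> fam_gen S G.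

(* Kac-Moody case: B^pa = B[beta | beta in Q^vee], polynomial ring in the basis
   e_1..e_m of Q^vee (central variables); phi_lambda substitutes e_r |-> lambda_r.
   Its image in B^P: families lambda |-> sum_mu c_mu prod_r lambda_r^mu_r. *)
Definition in_Apa_KM (B : unitAlgType CC) (m : nat) (F : 'rV[int]_m -> B) : Prop :=
  exists s : seq (B * {ffun 'I_m -> nat}),
    forall l, F l = \sum_(p <- s) p.1 * (\prod_(r < m) (l 0 r) ^+ (p.2 r))%:~R.

(* q case: B^pa = B[q^beta | beta in Q^vee] (central Laurent extension), with
   phi_lambda (q^{e_r}) = q^{lambda_r}. *)
Definition in_Apa_q (B : unitAlgType QF) (m : nat) (F : 'rV[int]_m -> B) : Prop :=
  exists s : seq (B * {ffun 'I_m -> int}),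
    forall l, F l = \sum_(p <- s) p.1 * (\prod_(r < m) (qv ^ (l 0 r)) ^ (p.2 r))%:A.

(* the family f_i^beta f_j f_i^-beta : lambda |-> x^<beta,lambda> y x^-<beta,lambda> *)
Definition conj_fam (k : fieldType) (B : unitAlgType k) (m : nat) (x y : B)
    (beta : 'rV[int]_m) : 'rV[int]_m -> B :=
  fun l => x ^ pairing beta l * y * x ^ (- pairing beta l).

Definition gens_KM (B : unitAlgType CC) (m : nat) (x y : B) (beta : 'rV[int]_m)
    (F : 'rV[int]_m -> B) : Prop :=
  [\/ F = (fun _ => x), F = (fun _ => x^-1), F = (fun _ => y)
    | F = (fun l => (pairing beta l)%:~R)].

Definition gens_q (B : unitAlgType QF) (m : nat) (di : nat) (x y : B)
    (beta : 'rV[int]_m) (F : 'rV[int]_m -> B) : Prop :=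
  [\/ F = (fun _ => x), F = (fun _ => x^-1), F = (fun _ => y)
    | F = (fun l => (qv ^ (di%:Z * pairing beta l))%:A)]
  \/ F = (fun l => (qv ^ (- (di%:Z * pairing beta l)))%:A).

(* Main.v *)
Require Import Defs.
From HB Require Import structures.
From mathcomp Require Import all_boot all_order all_algebra.
From mathcomp Require Import Rstruct complex.
From mathcomp Require Import ring.
Set Implicit Arguments.
Unset Strict Implicit.
Unset Printing Implicit Defensive.
Import GRing.Theory Num.Theory.
Local Open Scope ring_scope.

Section Seq.
Variable k : fieldType.
Variable V : lmodType k.

Lemma int_zero (g : int -> V) (a : k) : a != 0 -> g 0 = 0 ->
  (forall n, g (n + 1) = a *: g n) -> forall n, g n = 0.
Proof.
move=> a0 g0 gS n; case: n => n.
  elim: n => // n IH; have := gS n; rewrite IH scaler0.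
  by rewrite -[n.+1]addn1 PoszD => ->.
elim: n => [|n IH].
  have := gS (Negz 0); have -> : Negz 0 + 1 = 0 by []. rewrite g0 => /esym /eqP.
  by rewrite scaler_eq0 (negPf a0) /= => /eqP.
have := gS (Negz n.+1).
have -> : Negz n.+1 + 1 = Negz n by rewrite !NegzE; ring.
by rewrite IH => /esym /eqP; rewrite scaler_eq0 (negPf a0) /= => /eqP.
Qed.

Fixpoint qb (x : k) (N r : nat) : k :=
  match N, r with
  | 0, 0 => 1
  | 0, _ => 0
  | N'.+1, 0 => 1
  | N'.+1, r'.+1 => x^-1 ^+ r'.+1 * qb x N' r'.+1 + x ^+ (N' - r') * qb x N' r'
  end.

Lemma qb_gt (x : k) N r : (N < r)%N -> qb x N r = 0.
Proof.
elim: N r => [|N IH] [|r] //= lt.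
by rewrite (IH r.+1 (ltnW lt)) (IH r lt) !mulr0 addr0.
Qed.

Definition cf (x : k) (N : nat) (s : int) (r : nat) : k :=
  (-1) ^+ r * x ^ (r%:Z * (s - N%:Z + 1)) * qb x N r.

Definition S (x : k) (N : nat) (s : int) (u : int -> V) (n : int) : V :=
  \sum_(0 <= r < N.+1) cf x N s r *: u (n + (N - r)%N%:Z).

Definition Dl (a : k) (u : int -> V) (m : int) : V := u (m + 1) - a *: u m.

Lemma cf_pascal (x : k) N s r : x != 0 ->
  cf x N.+1 s r.+1 = cf x N (s - 2) r.+1 - cf x N (s - 2) r * x ^ s.
Proof.
move=> x0; have ux : x \is a GRing.unit by rewrite unitfE.
rewrite /cf.
case: (leqP r N) => rN; last first.
  rewrite (qb_gt x (ltnW rN : (N < r.+1)%N)) (qb_gt x rN).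
  by rewrite (qb_gt x (rN : (N.+1 < r.+1)%N)) !mulr0 !mul0r subrr.
have e1 : x^-1 ^+ r.+1 = x ^ (- (r.+1)%:Z) by rewrite -exprz_inv.
have e2 : x ^+ (N - r) = x ^ (N%:Z - r%:Z) by rewrite subzn.
simpl qb; rewrite e1 e2 exprS.
set q1 := qb x N r.+1; set q0 := qb x N r; set m := (-1) ^+ r.
transitivity (- m * (x ^ (r.+1%:Z * (s - N.+1%:Z + 1)) * x ^ (- r.+1%:Z)) * q1 +
  - m * (x ^ (r.+1%:Z * (s - N.+1%:Z + 1)) * x ^ (N%:Z - r%:Z)) * q0).
  ring.
rewrite -!exprzDr //.
have -> : r.+1%:Z * (s - N.+1%:Z + 1) + - r.+1%:Z = r.+1%:Z * (s - 2 - N%:Z + 1).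
  rewrite -[r.+1]addn1 -[N.+1]addn1 !PoszD; ring.
have -> : r.+1%:Z * (s - N.+1%:Z + 1) + (N%:Z - r%:Z) = r%:Z * (s - 2 - N%:Z + 1) + s.
  rewrite -[r.+1]addn1 -[N.+1]addn1 !PoszD; ring.
rewrite exprzDr //; ring.
Qed.

Lemma PoszS N : (N.+1)%:Z = N%:Z + 1. Proof. by rewrite -addn1 PoszD. Qed.

Lemma qb0 (x : k) N : qb x N 0 = 1. Proof. by case: N. Qed.

Lemma cf0 (x : k) N s : cf x N s 0 = 1.
Proof. by rewrite /cf qb0 expr0 mul0r expr0z !mul1r. Qed.

Lemma S_step x N s u n : x != 0 ->
  S x N.+1 s u n = S x N (s - 2) (Dl (x ^ s) u) n.
Proof.
move=> x0; rewrite /S /Dl big_nat_recl //.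
under eq_bigr => r _ do rewrite cf_pascal // scalerBl subSS.
rewrite sumrB.
under [in RHS]eq_bigr => r _ do rewrite scalerBr scalerA.
rewrite [in RHS]sumrB addrA; congr (_ - _).
rewrite [in RHS]big_nat_recl // [in LHS]big_nat_recr //= !cf0 subn0 subnn.
rewrite {2}/cf (qb_gt x (ltnSn N)) mulr0 scale0r addr0 subn0 -addrA -PoszS.
congr (_ + _).
apply: eq_big_nat => r /andP [_ rN].
by rewrite -addrA -PoszS subnSK.
Qed.

Lemma zmod_rearr (a b c d : V) : (a - b) - (c - d) = (a - c) - (b - d).
Proof. by rewrite !opprB -!addrA; congr (_ + _); rewrite [LHS]addrCA [RHS]addrCA [- c + _]addrC. Qed.

Variable Q : V -> Prop.
Hypothesis QD : forall a b, Q a -> Q b -> Q (a + b).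
Hypothesis QZ : forall (c : k) a, Q a -> Q (c *: a).

Lemma Q_sum (m : nat) (F : nat -> V) : Q (F 0%N) -> (forall i, Q (F i)) ->
  Q (\sum_(0 <= i < m) F i).
Proof.
move=> Q0 QF; apply: (big_ind Q) => //.
by have := QZ 0 Q0; rewrite scale0r.
Qed.

Lemma roots_neq (x : k) (s : int) (i : nat) : x != 0 ->
  (forall j, (0 < j)%N -> x ^+ j != 1) -> x ^ (s - 2 - 2 * i%:Z) - x ^ s != 0.
Proof.
move=> x0 xj; have ux : x \is a GRing.unit by rewrite unitfE.
rewrite subr_eq0; apply/negP => /eqP E.
have : x ^ s * x ^ (- (i.*2.+2)%N%:Z) = x ^ s * 1.
  rewrite mulr1 -exprzDr // -E; congr (_ ^ _).
  rewrite !PoszS -muln2 PoszM; ring.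
move/(mulfI (expfz_neq0 s x0)); rewrite -exprnN => /eqP; rewrite invr_eq1.
by apply/negP/xj.
Qed.

Lemma solq (x : k) : x != 0 -> (forall j, (0 < j)%N -> x ^+ j != 1) ->
  forall N s u, (forall m, Q (u m)) -> (forall n, S x N s u n = 0) ->
  exists z : nat -> V, (forall i, Q (z i)) /\ forall n, u n = \sum_(0 <= i < N) (x ^ (s - 2 * i%:Z)) ^ n *: z i.
Proof.
move=> x0 xj; have ux : x \is a GRing.unit by rewrite unitfE.
elim=> [|N IH] s u Qu H.
  exists (fun _ => 0); split; first by move=> i; have := QZ 0 (Qu 0); rewrite scale0r.
  move=> n; rewrite big_nil; have := H n.
  by rewrite /S big_nat1 cf0 scale1r subn0 addr0.
have H' : forall n, S x N (s - 2) (Dl (x ^ s) u) n = 0.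
  by move=> n; rewrite -S_step.
have QD' : forall m, Q (Dl (x ^ s) u m).
  by move=> m; apply: QD; [apply: Qu | have := QZ (-1) (QZ (x ^ s) (Qu m)); rewrite scaleN1r].
have [z [Qz Hz]] := IH _ _ QD' H'.
set a := x ^ s.
pose rho (i : nat) := x ^ (s - 2 - 2 * i%:Z).
pose d (i : nat) := (rho i - a)^-1.
pose w := u 0 - \sum_(0 <= i < N) d i *: z i.
have Ew : w = u 0 - \sum_(0 <= i < N) d i *: z i by [].
clearbody w.
pose z' (i : nat) := if i is i'.+1 then d i' *: z i' else w.
exists z'; split.
  case=> [|i] /=; last by apply: QZ.
  rewrite Ew; apply: QD => //.
  have := QZ (-1) (@Q_sum N (fun i => d i *: z i) (QZ _ (Qz 0%N)) (fun i => QZ _ (Qz i))).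
  by rewrite scaleN1r.
have ua : a \is a GRing.unit by rewrite unitfE expfz_neq0.
pose R n := \sum_(0 <= i < N.+1) (x ^ (s - 2 * i%:Z)) ^ n *: z' i.
have RE : forall n, R n = a ^ n *: w + \sum_(0 <= i < N) rho i ^ n *: (d i *: z i).
  move=> n; rewrite /R big_nat_recl // mulr0 subr0; congr (_ + _).
  apply: eq_bigr => i _; rewrite /rho /z'; congr ((x ^ _) ^ n *: _).
  rewrite PoszS; ring.
have RS : forall n, R (n + 1) - a *: R n = Dl a u n.
  move=> n; rewrite !RE Hz scalerDr opprD addrACA.
  rewrite (exprzDr ua n 1) expr1z mulrC -scalerA subrr add0r scaler_sumr -sumrB.
  apply: eq_bigr => i _; rewrite !scalerA -scalerBl; congr (_ *: _).
  have rn := roots_neq s i x0 xj.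
  have ur : rho i \is a GRing.unit by rewrite unitfE /rho expfz_neq0.
  rewrite (exprzDr ur n 1) expr1z /d.
  move: rn; rewrite -/(rho i) -/a => rn.
  by field.
move=> n; apply/eqP; rewrite -subr_eq0; apply/eqP; move: n.
apply: (int_zero (g := fun n => u n - R n) (a := a)).
- by rewrite expfz_neq0.
- rewrite /= RE [a ^ _]expr0z scale1r.
  rewrite (eq_bigr (fun i => d i *: z i)); last by move=> i _ /=; rewrite [rho i ^ _]expr0z scale1r.
  by rewrite Ew subrK subrr.
- move=> n; apply/eqP; rewrite -subr_eq0 scalerBr zmod_rearr RS.
  by rewrite /Dl subrr.
Qed.
Hypothesis char0 : forall i, (i`!)%:R != 0 :> k.

Definition gb (n : int) (i : nat) : k := (\prod_(0 <= t < i) (n%:~R - t%:R)) / (i`!)%:R.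

Lemma gb0 n : gb n 0 = 1.
Proof. by rewrite /gb big_geq // fact0 divr1. Qed.

Lemma gb0S i : gb 0 i.+1 = 0.
Proof. by rewrite /gb big_nat_recl // subrr mul0r mul0r. Qed.

Lemma gbS n i : gb (n + 1) i.+1 - gb n i.+1 = gb n i.
Proof.
rewrite /gb big_nat_recl // [in X in _ - X]big_nat_recr //= factS natrM.
rewrite (eq_bigr (fun t => n%:~R - t%:R)); last first.
  by move=> t _; rewrite intrD -addn1 natrD; ring.
have f0 := char0 i.
have f1 : (i.+1)%:R != 0 :> k.
  by apply: contra (char0 i.+1); rewrite factS natrM => /eqP ->; rewrite mul0r.
rewrite intrD subr0.
set P := \prod_(0 <= t < i) _.
field.
by rewrite f0 addrC natr1 f1.
Qed.

Lemma sol1 : forall N s u, (forall m, Q (u m)) -> (forall n, S 1 N s u n = 0) ->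
  exists z : nat -> V, (forall i, Q (z i)) /\
    forall n, u n = \sum_(0 <= i < N) gb n i *: z i.
Proof.
elim=> [|N IH] s u Qu H.
  exists (fun _ => 0); split; first by move=> i; have := QZ 0 (Qu 0); rewrite scale0r.
  move=> n; rewrite big_nil; have := H n.
  by rewrite /S big_nat1 cf0 scale1r subn0 addr0.
have H' : forall n, S 1 N (s - 2) (Dl 1 u) n = 0.
  by move=> n; have := H n; rewrite (S_step (x:=1)) ?oner_neq0 // exp1rz.
have QD' : forall m, Q (Dl 1 u m).
  by move=> m; apply: QD; [apply: Qu | have := QZ (-1) (QZ 1 (Qu m)); rewrite scaleN1r].
have [z [Qz Hz]] := IH _ _ QD' H'.
pose z' (i : nat) := if i is i'.+1 then z i' else u 0.
exists z'; split; first by case=> [|i] /=; [apply: Qu | apply: Qz].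
pose R n := \sum_(0 <= i < N.+1) gb n i *: z' i.
have RE : forall n, R n = u 0 + \sum_(0 <= i < N) gb n i.+1 *: z i.
  by move=> n; rewrite /R big_nat_recl // gb0 scale1r.
have RS : forall n, R (n + 1) - 1 *: R n = Dl 1 u n.
  move=> n; rewrite scale1r !RE Hz opprD addrACA subrr add0r -sumrB.
  by apply: eq_bigr => i _; rewrite -scalerBl gbS.
move=> n; apply/eqP; rewrite -subr_eq0; apply/eqP; move: n.
apply: (int_zero (g := fun n => u n - R n) (a := 1)).
- by rewrite oner_neq0.
- rewrite /= RE (eq_bigr (fun i => 0)); last by move=> i _; rewrite gb0S scale0r.
  by rewrite big1_eq addr0 subrr.
- move=> n; apply/eqP; rewrite -subr_eq0 scalerBr zmod_rearr RS.
  by rewrite /Dl subrr.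
Qed.
End Seq.

Section Apa.
Variable k : fieldType.
Variable B : lalgType k.
Variable m : nat.
Variable E : Type.
Variable mon : E -> 'rV[int]_m -> B.
Variable e0 : E.
Variable eadd : E -> E -> E.
Hypothesis mon0 : forall l, mon e0 l = 1.
Hypothesis monD : forall e e' l, mon (eadd e e') l = mon e l * mon e' l.
Hypothesis monC : forall e l b, b * mon e l = mon e l * b.

Definition isApa (F : 'rV[int]_m -> B) :=
  exists s : seq (B * E), forall l, F l = \sum_(p <- s) p.1 * mon p.2 l.

Lemma fam_Apa (S : ('rV[int]_m -> B) -> Prop) :
  (forall F, S F -> isApa F) -> forall F, fam_gen S F -> isApa F.
Proof.
move=> HS F; elim=> {F}.
- by move=> F /HS.
- by move=> c; exists [:: (c%:A, e0)] => l; rewrite big_seq1 /= mon0 mulr1.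
- move=> F G _ [s1 H1] _ [s2 H2]; exists (s1 ++ s2) => l.
  by rewrite big_cat /= H1 H2.
- move=> F G _ [s1 H1] _ [s2 H2].
  exists [seq (p.1 * q.1, eadd p.2 q.2) | p <- s1, q <- s2] => l.
  rewrite big_allpairs_dep /= H1 H2 mulr_suml; apply: eq_bigr => p _.
  rewrite mulr_sumr; apply: eq_bigr => q _ /=.
  by rewrite monD -mulrA [mon p.2 l * _]mulrA -monC !mulrA.
- by move=> F G FG _ [s H]; exists s => l; rewrite -FG H.
Qed.
End Apa.

Section FamGen.
Variable k : fieldType.
Variable B : lalgType k.
Variable m : nat.
Variable S : ('rV[int]_m -> B) -> Prop.

Lemma fg_const0 : fam_gen S (fun _ => 0).
Proof. by apply: fg_ext (fg_scal S 0) => l; rewrite scale0r. Qed.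

Lemma fg_sum (n : nat) (F : nat -> 'rV[int]_m -> B) :
  (forall i, fam_gen S (F i)) -> fam_gen S (fun l => \sum_(0 <= i < n) F i l).
Proof.
move=> HF; elim: n => [|n IH].
  by apply: fg_ext fg_const0 => l; rewrite big_nil.
apply: fg_ext (fg_add IH (HF n)) => l; by rewrite big_nat_recr.
Qed.

Lemma fg_pow (F : 'rV[int]_m -> B) n : fam_gen S F -> fam_gen S (fun l => F l ^+ n).
Proof.
move=> HF; elim: n => [|n IH].
  by apply: fg_ext (fg_scal S 1) => l; rewrite scale1r expr0.
by apply: fg_ext (fg_mul IH HF) => l; rewrite exprSr.
Qed.
End FamGen.

Section Serre.
Variable k : fieldType.
Variable B : unitAlgType k.

Definition uc (X Y : B) (n : int) := X ^ n * Y * X ^ (- n).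

Lemma serre_S (X Y : B) (x : k) (fct : nat -> k) N :
  X \is a GRing.unit ->
  (forall r, (r <= N)%N -> fct r != 0) ->
  (forall r, (r <= N)%N -> qb x N r * (fct (N - r)%N * fct r) = fct N) ->
  \sum_(r < N.+1) (-1) ^+ r *: (dpow (fct (N - r)%N) X (N - r) * Y * dpow (fct r) X r) = 0 ->
  forall n, S x N (N%:Z - 1) (uc X Y) n = 0.
Proof.
move=> uX fnz frel H n.
have H2 : \sum_(0 <= r < N.+1) (((-1) ^+ r * qb x N r) *: (X ^+ (N - r) * Y * X ^+ r)) = 0.
  have HH := congr1 (fun v => fct N *: v) H; rewrite /= scaler0 scaler_sumr in HH.
  rewrite big_mkord; apply: etrans HH.
  apply: eq_bigr => r _; rewrite /dpow -!scalerAl -scalerAr !scalerA.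
  rewrite [X in X *: _ = _](_ : _ = fct N * (-1) ^+ r / fct (N - r)%N / fct r) //.
  have rN : (r <= N)%N by rewrite -ltnS ltn_ord.
  have f1 := fnz _ rN; have f2 := fnz _ (leq_subr r N).
  rewrite -(frel r rN); field.
  by rewrite f1 f2.
rewrite /S (eq_big_nat _ _ (F2 := fun r => X ^ n * (((-1) ^+ r * qb x N r) *: (X ^+ (N - r) * Y * X ^+ r)) * X ^ (- (n + N%:Z)))).
  by rewrite -mulr_suml -mulr_sumr H2 mulr0 mul0r.
move=> r /andP [_ rN]; rewrite ltnS in rN.
rewrite -scalerAr -scalerAl.
have -> : cf x N (N%:Z - 1) r = (-1) ^+ r * qb x N r.
  rewrite /cf; have -> : (N%:Z - 1 - N%:Z + 1) = 0 by ring.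
  by rewrite mulr0 [x ^ _]expr0z mulr1.
rewrite /uc (exprzDr uX n).
have e2 : X ^+ r * X ^ (- (n + N%:Z)) = X ^ (- (n + (N - r)%N%:Z)).
  rewrite -[X ^+ r]/(X ^ (r%:Z)) -exprzDr // -subzn //; congr (_ ^ _); ring.
by rewrite -e2 !mulrA.
Qed.
End Serre.

Lemma qb1 (k : fieldType) N r : qb (1 : k) N r = ('C(N, r))%:R.
Proof.
elim: N r => [|N IH] [|r] //=.
by rewrite invr1 !expr1n !mul1r !IH binS natrD.
Qed.

Lemma qb_fact1 (k : fieldType) N r : (r <= N)%N ->
  qb (1 : k) N r * (((N - r)`!)%:R * (r`!)%:R) = (N`!)%:R.
Proof. by move=> rN; rewrite qb1 -!natrM [((N - r)`! * _)%N]mulnC (bin_fact rN). Qed.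

Section GQ.
Variable k : fieldType.
Definition gqint (x : k) (n : nat) : k := (x ^+ n - x ^- n) / (x - x^-1).
Definition gqfact (x : k) (n : nat) : k := \prod_(1 <= r < n.+1) gqint x r.

Lemma gqintD (x : k) a b : x != 0 -> x - x^-1 != 0 ->
  gqint x (a + b) = x^-1 ^+ b * gqint x a + x ^+ a * gqint x b.
Proof.
move=> x0 x1; rewrite /gqint exprD !exprVn.
have xa : x ^+ a != 0 by rewrite expf_neq0.
have xb : x ^+ b != 0 by rewrite expf_neq0.
have x2 : x * x - 1 != 0 by rewrite -(mulfV x0) -mulrBr mulf_neq0.
by field; rewrite x0 x2 xa xb.
Qed.

Lemma gqint0 (x : k) : gqint x 0 = 0.
Proof. by rewrite /gqint expr0 invr1 subrr mul0r. Qed.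

Lemma gqfactS (x : k) n : gqfact x n.+1 = gqfact x n * gqint x n.+1.
Proof. by rewrite /gqfact big_nat_recr. Qed.

Lemma gqb_fact (x : k) N r : x != 0 -> x - x^-1 != 0 -> (r <= N)%N ->
  qb x N r * (gqfact x (N - r) * gqfact x r) = gqfact x N.
Proof.
move=> x0 x1; elim: N r => [|N IH] [|r] //=.
- by move=> _; rewrite subn0 /gqfact !big_geq ?mul1r.
- by move=> _; rewrite subn0 {2}/gqfact big_geq // mul1r mulr1.
move=> rN; rewrite subSS gqfactS.
have T2 : x ^+ (N - r) * qb x N r * (gqfact x (N - r) * (gqfact x r * gqint x r.+1))
    = x ^+ (N - r) * gqfact x N * gqint x r.+1.
  by rewrite -(IH r rN); ring.
have T1 : x^-1 ^+ r.+1 * qb x N r.+1 * (gqfact x (N - r) * (gqfact x r * gqint x r.+1))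
    = x^-1 ^+ r.+1 * gqfact x N * gqint x (N - r).
  case: (ltnP r N) => rN'.
    rewrite -(IH r.+1 rN') -gqfactS.
    have -> : (N - r = (N - r.+1).+1)%N by rewrite subnSK.
    rewrite (gqfactS x (N - r.+1)); ring.
  have -> : r = N by apply/eqP; rewrite eqn_leq rN' andbT -ltnS.
  by rewrite qb_gt // subnn gqint0 !mulr0 mul0r.
rewrite mulrDl T1 T2 gqfactS.
have E : gqint x N.+1 = gqint x ((N - r) + r.+1) by rewrite addnS subnK.
by rewrite E gqintD //; ring.
Qed.
End GQ.

Section Gen.
Variable k : fieldType.

Lemma algM (B : lalgType k) (a b : k) : (a * b)%:A = a%:A * b%:A :> B.
Proof. by rewrite -!in_algE rmorphM. Qed.

Lemma algXn (B : lalgType k) (a : k) n : (a ^+ n)%:A = a%:A ^+ n :> B.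
Proof. by rewrite -!in_algE rmorphXn. Qed.

Lemma serre_transfer (A : lalgType k) (B : unitAlgType k) (iota : A -> B)
    (fct : nat -> k) (x y : A) (aij : int) :
  (forall x y, iota (x + y) = iota x + iota y) ->
  (forall x y, iota (x * y) = iota x * iota y) -> iota 1 = 1 ->
  (forall (c : k) x, iota (c *: x) = c *: iota x) ->
  serre_rel fct x y aij ->
  \sum_(r < (`|1 - aij|%N).+1) (-1) ^+ r *:
     (dpow (fct (`|1 - aij|%N - r)%N) (iota x) (`|1 - aij|%N - r) * iota y
        * dpow (fct r) (iota x) r) = 0.
Proof.
move=> iD iM i1 iZ; rewrite /serre_rel /=; set N := `|1 - aij|%N => H.
have i0 : iota 0 = 0.
  by apply/eqP; rewrite -(addrI (iota 0) (_ : iota 0 + iota 0 = iota 0 + 0)) // addr0 -iD addr0.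
have iX : forall n, iota (x ^+ n) = iota x ^+ n.
  by elim=> [|n IH]; rewrite ?expr0 // !exprS iM IH.
have HH := congr1 iota H; rewrite (big_morph iota iD i0) i0 in HH.
apply: etrans HH; apply: eq_bigr => r _.
by rewrite iZ !iM /dpow !iZ !iX.
Qed.

Lemma fg_prod (B : lalgType k) m (S : ('rV[int]_m -> B) -> Prop) (n : nat)
  (F : nat -> 'rV[int]_m -> B) :
  (forall i, fam_gen S (F i)) -> fam_gen S (fun l => \prod_(0 <= i < n) F i l).
Proof.
move=> HF; elim: n => [|n IH].
  by apply: fg_ext (fg_scal S 1) => l; rewrite big_nil scale1r.
apply: fg_ext (fg_mul IH (HF n)) => l; by rewrite big_nat_recr.
Qed.

Lemma conj_same (B : unitAlgType k) (X : B) (n : int) : X \is a GRing.unit ->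
  X ^ n * X * X ^ (- n) = X.
Proof.
move=> uX; rewrite -{2}(expr1z X) -exprzDr // -exprzDr // addrC addrA.
by rewrite addNr add0r expr1z.
Qed.

Lemma fg_exprz (B : unitAlgType k) m (S : ('rV[int]_m -> B) -> Prop) (X : B) (z : int) :
  fam_gen S (fun _ => X) -> fam_gen S (fun _ => X^-1) -> fam_gen S (fun _ => X ^ z).
Proof.
move=> H1 H2; case: z => n.
  exact: (fg_pow n H1).
by apply: fg_ext (fg_pow n.+1 H2) => l; rewrite exprVn.
Qed.
End Gen.

Lemma gqfact_neq0 (k : fieldType) (x : k) : x != 0 ->
  (forall j, (0 < j)%N -> x ^+ j != 1) -> forall n, gqfact x n != 0.
Proof.
move=> x0 xj.
have num : forall t, (0 < t)%N -> x ^+ t - x ^- t != 0.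
  move=> t t0; rewrite subr_eq0; apply/negP => /eqP E.
  have : x ^+ t * x ^+ t = 1 by rewrite {1}E mulVf // expf_neq0.
  by rewrite -exprD; apply/eqP/xj; rewrite addn_gt0 t0.
elim=> [|n IH]; first by rewrite /gqfact big_geq ?oner_neq0.
rewrite gqfactS mulf_neq0 // /gqint mulf_neq0 ?num // invr_eq0.
by have := num 1%N isT; rewrite expr1.
Qed.

Lemma qfact_g (x : QF) n : qfact x n = gqfact x n.
Proof. by rewrite /qfact /gqfact. Qed.

Lemma qv_neq0 : qv != 0.
Proof. by rewrite /qv tofrac_eq0 polyX_eq0. Qed.

Lemma qvXn_neq1 n : (0 < n)%N -> qv ^+ n != 1.
Proof.
move=> n0; rewrite /qv -tofracXn -tofrac1 tofrac_eq; apply/negP => /eqP E.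
by have := congr1 (fun p : {poly CC} => size p) E; rewrite size_polyXn size_poly1 => -[] nE; rewrite nE in n0.
Qed.

Section ApaQ.
Variable B : unitAlgType QF.
Variable m : nat.
Definition monq (e : {ffun 'I_m -> int}) (l : 'rV[int]_m) : B :=
  (\prod_(r < m) (qv ^ (l 0 r)) ^ (e r))%:A.

Lemma monq0 l : monq [ffun => 0] l = 1.
Proof. by rewrite /monq big1 ?scale1r // => r _; rewrite ffunE expr0z. Qed.

Lemma monqD (e e' : {ffun 'I_m -> int}) l : monq [ffun r => e r + e' r] l = monq e l * monq e' l.
Proof.
rewrite /monq -algM -big_split /=; congr (_%:A); apply: eq_bigr => r _.
by rewrite ffunE exprzDr // unitfE expfz_neq0 // qv_neq0.
Qed.

Lemma monqC (e : {ffun 'I_m -> int}) l (b : B) : b * monq e l = monq e l * b.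
Proof. by rewrite /monq mulr_algl mulr_algr. Qed.

Lemma qpow_sum (c : 'I_m -> int) : \prod_(r < m) qv ^ c r = qv ^ (\sum_(r < m) c r).
Proof.
have uq : qv \is a GRing.unit by rewrite unitfE qv_neq0.
by rewrite (big_morph (fun z => qv ^ z) (exprzDr uq) (expr0z qv)).
Qed.

Lemma apa_q (dd : nat) (X Y : B) beta F : gens_q dd X Y beta F -> isApa monq F.
Proof.
have cst : forall b : B, isApa monq (fun _ => b).
  by move=> b; exists [:: (b, [ffun => 0])] => l; rewrite big_seq1 /= monq0 mulr1.
have pw : forall sg : int, isApa monq (fun l => (qv ^ (sg * (dd%:Z * pairing beta l)))%:A).
  move=> sg; exists [:: (1, [ffun r => sg * (dd%:Z * beta 0 r)])] => l.
  rewrite big_seq1 /= mul1r /monq; congr (_%:A).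
  rewrite (eq_bigr (fun r => qv ^ (l 0 r * (sg * (dd%:Z * beta 0 r))))); last first.
    by move=> r _; rewrite ffunE exprz_exp.
  rewrite qpow_sum /pairing mulr_sumr mulr_sumr; congr (_ ^ _); apply: eq_bigr => r _; ring.
move=> [[->|->|->|->]|->] //.
  by have [s Hs] := pw 1; exists s => l; rewrite -Hs mul1r.
by have [s Hs] := pw (-1); exists s => l; rewrite -Hs mulN1r.
Qed.
End ApaQ.

Lemma main_q :
  forall (I : finType) (a : I -> I -> int) (d : I -> nat) (m : nat)
          (coroot root : I -> 'rV[int]_m),
     sym_gcm a d -> realization a coroot root ->
     forall (A : algType QF) (f : I -> A) (B : unitAlgType QF) (iota : A -> B),
       quotient_of_Uminus (q_fact d) a f -> is_domain A ->
       (forall i, f i != 0) -> ore_localization f iota ->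
       forall (beta : 'rV[int]_m) (i j : I),
         in_Apa_q (conj_fam (iota (f i)) (iota (f j)) beta)
         /\ fam_gen (gens_q (d i) (iota (f i)) (iota (f j)) beta)
                    (conj_fam (iota (f i)) (iota (f j)) beta).
Proof.
move=> I a d m coroot root [_ _ _ dpos _] _ A f B iota [_ Hser] _ _
  [[iD iM i1 iZ _] [iU _]] beta i j.
set X := iota (f i); set Y := iota (f j).
set G := gens_q (d i) X Y beta.
have uX : X \is a GRing.unit := iU i.
have gX : fam_gen G (fun _ => X) by apply: fg_gen; left; apply: Or41.
have gXi : fam_gen G (fun _ => X^-1) by apply: fg_gen; left; apply: Or42.
have gY : fam_gen G (fun _ => Y) by apply: fg_gen; left; apply: Or43.
have gP : fam_gen G (fun l => (qv ^ ((d i)%:Z * pairing beta l))%:A).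
  by apply: fg_gen; left; apply: Or44.
have gN : fam_gen G (fun l => (qv ^ (- ((d i)%:Z * pairing beta l)))%:A).
  by apply: fg_gen; right.
have FG : fam_gen G (conj_fam X Y beta).
  case: (eqVneq i j) => [eij|ij].
    have YX : Y = X by rewrite /Y -eij.
    by apply: fg_ext gX => l; rewrite /conj_fam YX conj_same.
  pose x := qv ^+ d i.
  have x0 : x != 0 by rewrite expf_neq0 // qv_neq0.
  have xj : forall t, (0 < t)%N -> x ^+ t != 1.
    by move=> t t0; rewrite /x -exprM qvXn_neq1 // muln_gt0 dpos.
  have x1 : x - x^-1 != 0.
    rewrite subr_eq0; apply/negP => /eqP E.
    have : x ^+ 2 = 1 by rewrite expr2 {1}E mulVf.
    by apply/eqP/xj.
  have HS := serre_transfer iD iM i1 iZ (Hser i j ij).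
  set N := `|1 - a i j|%N in HS.
  have fnz : forall r, (r <= N)%N -> q_fact d i r != 0.
    move=> r _; rewrite /q_fact qfact_g; exact: (gqfact_neq0 x0 xj r).
  have frel : forall r, (r <= N)%N ->
      qb x N r * (q_fact d i (N - r)%N * q_fact d i r) = q_fact d i N.
    move=> r rN; rewrite /q_fact !qfact_g; exact: (gqb_fact x0 x1 rN).
  have HS2 := serre_S uX fnz frel HS.
  pose Q := fun b : B => fam_gen G (fun _ => b).
  have QD : forall u v, Q u -> Q v -> Q (u + v) by move=> u v Hu Hv; apply: fg_add.
  have QZ : forall (c : QF) u, Q u -> Q (c *: u).
    by move=> c u Hu; apply: fg_ext (fg_mul (fg_scal G c) Hu) => l; rewrite mulr_algl.
  have Qu : forall t, Q (uc X Y t).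
    by move=> t; apply: fg_mul; [apply: fg_mul => // |]; apply: fg_exprz.
  have [z [Qz Hz]] := solq QD QZ x0 xj Qu HS2.
  have gpow : forall e : int, fam_gen G (fun l => ((x ^ e) ^ pairing beta l)%:A).
    move=> e.
    have E : forall l, (x ^ e) ^ pairing beta l = (qv ^ ((d i)%:Z * pairing beta l)) ^ e.
      by move=> l; rewrite /x -[qv ^+ d i]/(qv ^ (d i)%:Z) !exprz_exp; congr (_ ^ _); ring.
    case: e E => t E.
      by apply: fg_ext (fg_pow t gP) => l; rewrite E -algXn.
    apply: fg_ext (fg_pow t.+1 gN) => l; rewrite E -algXn; congr (_%:A).
    by rewrite -invr_expz exprVn.
  apply: (fg_ext _ (@fg_sum _ _ _ G N
     (fun t l => ((x ^ (N%:Z - 1 - 2 * t%:Z)) ^ pairing beta l)%:A * z t) _)).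
    move=> l; rewrite /conj_fam -/(uc X Y (pairing beta l)) Hz.
    by apply: eq_bigr => t _; rewrite mulr_algl.
  by move=> t; apply: fg_mul; [apply: gpow | apply: Qz].
split => //.
exact: (fam_Apa (@monq0 B m) (@monqD B m) (@monqC B m) (@apa_q B m (d i) X Y beta) FG).
Qed.

Section ApaKM.
Variable B : unitAlgType CC.
Variable m : nat.
Definition monk (e : {ffun 'I_m -> nat}) (l : 'rV[int]_m) : B :=
  (\prod_(r < m) (l 0 r) ^+ (e r))%:~R.

Lemma monk0 l : monk [ffun => 0%N] l = 1.
Proof. by rewrite /monk big1 // => r _; rewrite ffunE expr0. Qed.

Lemma monkD (e e' : {ffun 'I_m -> nat}) l :
  monk [ffun r => (e r + e' r)%N] l = monk e l * monk e' l.
Proof.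
rewrite /monk -intrM -big_split /=; congr (_%:~R); apply: eq_bigr => r _.
by rewrite ffunE exprD.
Qed.

Lemma monkC (e : {ffun 'I_m -> nat}) l (b : B) : b * monk e l = monk e l * b.
Proof. exact: commr_int. Qed.

Lemma apa_km (X Y : B) beta F : gens_KM X Y beta F -> isApa monk F.
Proof.
have cst : forall b : B, isApa monk (fun _ => b).
  by move=> b; exists [:: (b, [ffun => 0%N])] => l; rewrite big_seq1 /= monk0 mulr1.
move=> [->|->|->|->] //.
exists [seq ((beta 0 r)%:~R, [ffun t => nat_of_bool (t == r)]) | r <- index_enum 'I_m] => l.
rewrite big_map /pairing (big_morph (fun z : int => z%:~R : B) (intrD B) (mulr0z 1)).
apply: eq_bigr => r _ /=; rewrite intrM /monk; congr (_ * _%:~R).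
rewrite (bigD1 r) //= ffunE eqxx expr1 big1 ?mulr1 // => t tr.
by rewrite ffunE (negPf tr) expr0.
Qed.
End ApaKM.

Lemma main_km :
  forall (I : finType) (a : I -> I -> int) (d : I -> nat) (m : nat)
          (coroot root : I -> 'rV[int]_m),
     sym_gcm a d -> realization a coroot root ->
     forall (A : algType CC) (f : I -> A) (B : unitAlgType CC) (iota : A -> B),
       quotient_of_Uminus (@km_fact I) a f -> is_domain A ->
       (forall i, f i != 0) -> ore_localization f iota ->
       forall (beta : 'rV[int]_m) (i j : I),
         in_Apa_KM (conj_fam (iota (f i)) (iota (f j)) beta)
         /\ fam_gen (gens_KM (iota (f i)) (iota (f j)) beta)
                    (conj_fam (iota (f i)) (iota (f j)) beta).
Proof.
move=> I a d m coroot root _ _ A f B iota [_ Hser] _ _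
  [[iD iM i1 iZ _] [iU _]] beta i j.
set X := iota (f i); set Y := iota (f j).
set G := gens_KM X Y beta.
have uX : X \is a GRing.unit := iU i.
have gX : fam_gen G (fun _ => X) by apply: fg_gen; apply: Or41.
have gXi : fam_gen G (fun _ => X^-1) by apply: fg_gen; apply: Or42.
have gY : fam_gen G (fun _ => Y) by apply: fg_gen; apply: Or43.
have gP : fam_gen G (fun l => (pairing beta l)%:~R) by apply: fg_gen; apply: Or44.
have FG : fam_gen G (conj_fam X Y beta).
  case: (eqVneq i j) => [eij|ij].
    have YX : Y = X by rewrite /Y -eij.
    by apply: fg_ext gX => l; rewrite /conj_fam YX conj_same.
  have char0 : forall t, (t`!)%:R != 0 :> CC.
    by move=> t; rewrite pnatr_eq0 -lt0n fact_gt0.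
  have HS := serre_transfer iD iM i1 iZ (Hser i j ij).
  set N := `|1 - a i j|%N in HS.
  have fnz : forall r, (r <= N)%N -> km_fact i r != 0.
    move=> r _; exact: char0.
  have frel : forall r, (r <= N)%N ->
      qb 1 N r * (km_fact i (N - r)%N * km_fact i r) = km_fact i N.
    move=> r rN; exact: (qb_fact1 CC rN).
  have HS2 := serre_S uX fnz frel HS.
  pose Q := fun b : B => fam_gen G (fun _ => b).
  have QD : forall u v, Q u -> Q v -> Q (u + v) by move=> u v Hu Hv; apply: fg_add.
  have QZ : forall (c : CC) u, Q u -> Q (c *: u).
    by move=> c u Hu; apply: fg_ext (fg_mul (fg_scal G c) Hu) => l; rewrite mulr_algl.
  have Qu : forall t, Q (uc X Y t).
    by move=> t; apply: fg_mul; [apply: fg_mul => // |]; apply: fg_exprz.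
  have [z [Qz Hz]] := sol1 QD QZ char0 Qu HS2.
  have ggb : forall t, fam_gen G (fun l => (gb CC (pairing beta l) t)%:A).
    move=> t.
    apply: (fg_ext _ (fg_mul (@fg_prod _ _ _ G t
       (fun s l => (pairing beta l)%:~R + (- (s%:R : CC))%:A) _) (fg_scal G (t`!%:R)^-1))).
      move=> l; rewrite /gb algM -!in_algE rmorph_prod; congr (_ * _).
      by apply: eq_bigr => s _; rewrite rmorphB rmorph_int scaleNr scaler_nat rmorph_nat.
    by move=> s; apply: fg_add => //; apply: fg_scal.
  apply: (fg_ext _ (@fg_sum _ _ _ G N
     (fun t l => (gb CC (pairing beta l) t)%:A * z t) _)).
    move=> l; rewrite /conj_fam -/(uc X Y (pairing beta l)) Hz.
    by apply: eq_bigr => t _; rewrite mulr_algl.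
  by move=> t; apply: fg_mul; [apply: ggb | apply: Qz].
split => //.
exact: (fam_Apa (@monk0 B m) (@monkD B m) (@monkC B m) (@apa_km B m X Y beta) FG).
Qed.

Theorem mainTheorem5 :
  (* Kac-Moody case *)
  (forall (I : finType) (a : I -> I -> int) (d : I -> nat) (m : nat)
          (coroot root : I -> 'rV[int]_m),
     sym_gcm a d -> realization a coroot root ->
     forall (A : algType CC) (f : I -> A) (B : unitAlgType CC) (iota : A -> B),
       quotient_of_Uminus (@km_fact I) a f -> is_domain A ->
       (forall i, f i != 0) -> ore_localization f iota ->
       forall (beta : 'rV[int]_m) (i j : I),
         in_Apa_KM (conj_fam (iota (f i)) (iota (f j)) beta)
         /\ fam_gen (gens_KM (iota (f i)) (iota (f j)) beta)
                    (conj_fam (iota (f i)) (iota (f j)) beta))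
  /\
  (* q-difference case *)
  (forall (I : finType) (a : I -> I -> int) (d : I -> nat) (m : nat)
          (coroot root : I -> 'rV[int]_m),
     sym_gcm a d -> realization a coroot root ->
     forall (A : algType QF) (f : I -> A) (B : unitAlgType QF) (iota : A -> B),
       quotient_of_Uminus (q_fact d) a f -> is_domain A ->
       (forall i, f i != 0) -> ore_localization f iota ->
       forall (beta : 'rV[int]_m) (i j : I),
         in_Apa_q (conj_fam (iota (f i)) (iota (f j)) beta)
         /\ fam_gen (gens_q (d i) (iota (f i)) (iota (f j)) beta)
                    (conj_fam (iota (f i)) (iota (f j)) beta)).
Proof.
split; [exact: main_km | exact: main_q].
Qed.
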